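(* Let $\ell\ge 2$, let $G$ be an $n$-vertex graph with average degree $d>0$, and let $x_{i-1}y_{i-1}$ and $x_{i+1}y_{i+1}$ be vertex-disjoint edges of $G$ such that $(x_{i-1},y_{i-1},x_{i+1},y_{i+1})$ is not rich. Then $$\sum_{(x_i,y_i)}\frac{1}{\max\big(d(x_{i-1},y_i),\frac{d^2}{n}\big)\cdot \max\big(d(x_i,y_{i+1}),\frac{d^2}{n}\big)}\le 8\ell,$$ where the sum is over all pairs $(x_i,y_i)$ of vertices such that $x_{i-1},y_{i-1},x_i,y_i,x_{i+1},y_{i+1}$ are distinct and $x_iy_i,\ x_{i-1}x_i,\ x_ix_{i+1},\ y_{i-1}y_i,\ y_iy_{i+1}\in E(G)$ (i.e. these six vertices form a copy of $P_3^{\square}$).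
   Context: $d(a,b)$ denotes the number of common neighbours of $a,b$ in $G$. For distinct vertices $w,z,w',z'$, the $4$-tuple $(w,z,w',z')$ is rich if $wz,w'z'\in E(G)$ and there are at least $4\ell$ pairwise vertex-disjoint edges $xy\in E(G)$ with $wx,xw',zy,yz'\in E(G)$. *)

(* Defs.v *)
From mathcomp Require Import all_boot all_order all_algebra.
Set Implicit Arguments. Unset Strict Implicit. Unset Printing Implicit Defensive.
Import Order.TTheory GRing.Theory Num.Theory.

Definition simple_graph (T : finType) (e : rel T) : Prop :=
  symmetric e /\ irreflexive e.

Definition codeg (T : finType) (e : rel T) (a b : T) : nat :=
  #|[set c | e a c && e b c]|.

Definition deg (T : finType) (e : rel T) (v : T) : nat := #|[set c | e v c]|.

Definition avg_deg (R : realFieldType) (T : finType) (e : rel T) : R :=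
  ((\sum_(v : T) deg e v)%:R / #|T|%:R)%R.

Definition rich_witness (T : finType) (e : rel T) (w z w' z' : T)
    (M : {set T * T}) : Prop :=
  (forall p, p \in M -> [&& e p.1 p.2, e w p.1, e p.1 w', e z p.2 & e p.2 z'])
  /\ (forall p q, p \in M -> q \in M -> p != q ->
        [disjoint [set p.1; p.2] & [set q.1; q.2]]).

Definition rich (T : finType) (e : rel T) (l : nat) (w z w' z' : T) : Prop :=
  uniq [:: w; z; w'; z'] /\ e w z /\ e w' z' /\
  exists M : {set T * T}, rich_witness e w z w' z' M /\ 4 * l <= #|M|.

(* Main.v *)
Require Import Defs.
From mathcomp Require Import all_boot all_order all_algebra.
From mathcomp Require Import lra zify.
Set Implicit Arguments. Unset Strict Implicit.
Import Order.TTheory GRing.Theory Num.Theory.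

Definition candP (T : finType) (e : rel T) (xm ym xp yp : T) (p : T * T) : bool :=
  uniq [:: xm; ym; p.1; p.2; xp; yp] &&
  [&& e p.1 p.2, e xm p.1, e p.1 xp, e ym p.2 & e p.2 yp].

Definition termF (R : realFieldType) (T : finType) (e : rel T) (xm yp : T) (D : R)
  (p : T * T) : R :=
  (1 / (Num.max ((codeg e xm p.2)%:R) D * Num.max ((codeg e p.1 yp)%:R) D))%R.

Local Open Scope ring_scope.

Lemma inv_prod_le (R : realFieldType) (A B a b : R) :
  0 < a -> 0 < b -> a <= A -> b <= B -> 1/(A*B) <= 1/(a*b).
Proof.
move=> a0 b0 aA bB.
have A0 : 0 < A by apply: lt_le_trans aA.
have B0 : 0 < B by apply: lt_le_trans bB.
rewrite !div1r lef_pV2 ?posrE ?mulr_gt0 //.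
by apply: ler_pM => //; apply: ltW.
Qed.

Lemma termF_ge0 (R : realFieldType) (T : finType) (e : rel T) (xm yp : T) (D : R) p :
  0 <= termF e xm yp D p.
Proof.
rewrite /termF; apply: divr_ge0 => //; apply: mulr_ge0;
  by rewrite le_max ler0n.
Qed.

Lemma frac_bound (R : realFieldType) (k c : nat) :
  (k <= c)%N -> k%:R * (1 / (2 * c%:R)) <= 1/2 :> R.
Proof.
move=> kc.
case: c kc => [|c] kc.
  have -> : k = 0%N by lia.
  by rewrite mul0r divr_ge0.
rewrite mulrA mulr1 ler_pdivrMr ?mulr_gt0 //.
have -> : 1 / 2 * (2 * c.+1%:R) = c.+1%:R :> R.
  by rewrite mulrA mul1r mulVf ?mul1r // pnatr_eq0.
by rewrite ler_nat.
Qed.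

Section Main.
Variables (R : realFieldType) (T : finType) (e : rel T) (xm ym xp yp : T) (D : R).
Hypothesis esym : symmetric e.
Hypothesis exy_m : e xm ym.
Hypothesis exy_p : e xp yp.

Lemma codeg1_ge2 p : candP e xm ym xp yp p -> (2 <= codeg e xm p.2)%N.
Proof.
case/andP=> u /and5P[h12 hm1 h1p hm2 h2p].
have ne : p.1 != ym.
  apply: contraTneq u => ->; by rewrite /= !inE eqxx /= andbF.
suff sub : [set p.1; ym] \subset [set c | e xm c && e p.2 c].
  by have := subset_leq_card sub; rewrite cards2 ne.
apply/subsetP => c; rewrite !inE => /orP[] /eqP ->.
  by rewrite hm1 esym.
by rewrite exy_m esym.
Qed.

Lemma codeg2_ge2 p : candP e xm ym xp yp p -> (2 <= codeg e p.1 yp)%N.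
Proof.
case/andP=> u /and5P[h12 hm1 h1p hm2 h2p].
have ne : p.2 != xp.
  apply: contraTneq u => ->; by rewrite /= !inE eqxx /= !andbF.
suff sub : [set p.2; xp] \subset [set c | e p.1 c && e yp c].
  by have := subset_leq_card sub; rewrite cards2 ne.
apply/subsetP => c; rewrite !inE => /orP[] /eqP ->.
  by rewrite h12 esym.
by rewrite h1p esym.
Qed.

Lemma termF_le1 p : candP e xm ym xp yp p ->
  termF e xm yp D p <= 1 / (2 * (codeg e p.1 yp)%:R).
Proof.
move=> cp; have h1 := codeg1_ge2 cp; have h2 := codeg2_ge2 cp.
rewrite /termF; apply: inv_prod_le.
- by [].
- by rewrite ltr0n; lia.
- by rewrite le_max (_ : 2 <= _) // (ler_nat R 2).
- by rewrite le_max lexx.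
Qed.

Lemma termF_le2 p : candP e xm ym xp yp p ->
  termF e xm yp D p <= 1 / (2 * (codeg e xm p.2)%:R).
Proof.
move=> cp; have h1 := codeg1_ge2 cp; have h2 := codeg2_ge2 cp.
rewrite /termF [2 * _]mulrC; apply: inv_prod_le.
- by rewrite ltr0n; lia.
- by [].
- by rewrite le_max lexx.
- by rewrite le_max (_ : 2 <= _) // (ler_nat R 2).
Qed.

Lemma fiber1 v :
  \sum_(p | candP e xm ym xp yp p && (p.1 == v)) termF e xm yp D p <= 1/2.
Proof.
set A := [set p | candP e xm ym xp yp p && (p.1 == v)].
rewrite (eq_bigl (fun p => p \in A)); last by move=> p; rewrite inE.
apply: (@le_trans _ _ (\sum_(p in A) 1 / (2 * (codeg e v yp)%:R))).
  apply: ler_sum => p; rewrite inE => /andP[cp /eqP <-]; exact: termF_le1.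
rewrite sumr_const -(mulr_natl _ #|A|); apply: frac_bound.
have inj : {in A &, injective snd}.
  move=> [a b] [a' b']; rewrite !inE /= => /andP[_ /eqP->] /andP[_ /eqP->] /= ->.
  by [].
rewrite -(card_in_imset inj) /codeg; apply: (subset_leq_card (_ : _ \subset _)).
apply/subsetP => c /imsetP[[a b] hA ->]; move: hA; rewrite /A inE /= => /andP[/andP[_ /and5P[h12 _ _ _ h2p]] /eqP <-].
by rewrite inE h12 esym.
Qed.

Lemma fiber2 v :
  \sum_(p | candP e xm ym xp yp p && (p.2 == v)) termF e xm yp D p <= 1/2.
Proof.
set A := [set p | candP e xm ym xp yp p && (p.2 == v)].
rewrite (eq_bigl (fun p => p \in A)); last by move=> p; rewrite inE.
apply: (@le_trans _ _ (\sum_(p in A) 1 / (2 * (codeg e xm v)%:R))).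
  apply: ler_sum => p; rewrite inE => /andP[cp /eqP <-]; exact: termF_le2.
rewrite sumr_const -(mulr_natl _ #|A|); apply: frac_bound.
have inj : {in A &, injective fst}.
  move=> [a b] [a' b']; rewrite !inE /= => /andP[_ /eqP->] /andP[_ /eqP->] /= ->.
  by [].
rewrite -(card_in_imset inj) /codeg; apply: (subset_leq_card (_ : _ \subset _)).
apply/subsetP => c /imsetP[[a b] hA ->]; move: hA; rewrite /A inE /= => /andP[/andP[_ /and5P[h12 hm1 _ _ _]] /eqP <-].
by rewrite inE hm1 esym.
Qed.


Lemma main_bound (l : nat) : ~ rich e l xm ym xp yp -> uniq [:: xm; ym; xp; yp] ->
  \sum_(p | candP e xm ym xp yp p) termF e xm yp D p <= (8 * l)%:R.
Proof.
move=> nr uq.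
set S := [set p | candP e xm ym xp yp p].
pose okM (M : {set T*T}) := (M \subset S) && [forall p in M, forall q in M,
   (p != q) ==> [disjoint [set p.1; p.2] & [set q.1; q.2]]].
have ok0 : okM set0 by rewrite /okM sub0set; apply/forall_inP => p; rewrite inE.
case: (arg_maxnP (fun M : {set T*T} => #|M|) ok0) => M okMM Mmax.
have Mlt : (#|M| < 4 * l)%N.
  rewrite ltnNge; apply/negP => h; apply: nr; split => //; split => //; split => //.
  exists M; split => //; split.
  - move=> p pM; move: okMM => /andP[/subsetP sub _]; have := sub p pM.
    by rewrite inE => /andP[_ ->].
  - move=> p q pM qM pq; move: okMM => /andP[_ /forall_inP hh].
    have /forall_inP h' := hh p pM; exact: (implyP (h' q qM) pq).
set C := [set q.1 | q in M] :|: [set q.2 | q in M].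
have inC : forall q, q \in M -> (q.1 \in C) && (q.2 \in C).
  by move=> q qM; rewrite !inE !imset_f ?orbT.
have cover : forall p, candP e xm ym xp yp p -> (p.1 \in C) || (p.2 \in C).
  move=> p cp; apply/negPn/negP; rewrite negb_or => /andP[n1 n2].
  have disj : forall q, q \in M -> [disjoint [set p.1; p.2] & [set q.1; q.2]].
    move=> q qM; rewrite -setI_eq0; apply/eqP/setP => x; rewrite !inE.
    apply/negbTE/negP => /andP[/orP[] /eqP -> /orP[] /eqP hq].
    - by move: n1; rewrite hq; case/andP: (inC q qM) => ->.
    - by move: n1; rewrite hq; case/andP: (inC q qM) => _ ->.
    - by move: n2; rewrite hq; case/andP: (inC q qM) => ->.
    - by move: n2; rewrite hq; case/andP: (inC q qM) => _ ->.
  have pM : p \notin M.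
    by apply/negP => pM; move: n1; case/andP: (inC p pM) => ->.
  have okp : okM (p |: M).
    rewrite /okM; apply/andP; split.
      by rewrite subUset sub1set inE cp /=; case/andP: okMM.
    apply/forall_inP => a; rewrite in_setU1 => /orP[/eqP -> | aM];
      apply/forall_inP => b; rewrite in_setU1 => /orP[/eqP -> | bM];
      apply/implyP => ab.
    - by rewrite eqxx in ab.
    - exact: disj.
    - rewrite disjoint_sym; exact: disj.
    - case/andP: okMM => _ /forall_inP h; have /forall_inP h' := h a aM.
      exact: (implyP (h' b bM) ab).
  have := Mmax _ okp; rewrite cardsU1 pM /=; lia.
pose F := termF e xm yp D.
apply: (@le_trans _ _ (\sum_(p | candP e xm ym xp yp p)
    \sum_(v in C) ((p.1 == v)%:R * F p + (p.2 == v)%:R * F p))).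
  apply: ler_sum => p cp.
  have F0 : 0 <= F p := termF_ge0 e xm yp D p.
  have [v0 [v0C hv0]] : exists v0, v0 \in C /\ ((p.1 == v0) || (p.2 == v0)).
    by case/orP: (cover p cp) => h; [exists p.1 | exists p.2]; rewrite h eqxx ?orbT.
  rewrite (bigD1 v0) //=.
  have rest : 0 <= \sum_(v in C | v != v0) ((p.1 == v)%:R * F p + (p.2 == v)%:R * F p).
    by apply: sumr_ge0 => v _; rewrite addr_ge0 // mulr_ge0 // ler0n.
  rewrite /F in F0 rest *.
  case/orP: hv0 => /eqP hv; rewrite -hv in rest *; rewrite eqxx mul1r.
    have nn := mulr_ge0 (ler0n R (p.2 == p.1)) F0; lra.
  have nn := mulr_ge0 (ler0n R (p.1 == p.2)) F0; lra.
rewrite exchange_big /=.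
apply: (@le_trans _ _ (\sum_(v in C) 1)).
  apply: ler_sum => v vC; rewrite big_split /=.
  have E1 : \sum_(p | candP e xm ym xp yp p) (p.1 == v)%:R * F p =
            \sum_(p | candP e xm ym xp yp p && (p.1 == v)) F p.
    by rewrite [RHS]big_mkcondr; apply: eq_bigr => p _; case: eqP => _; rewrite ?mul1r ?mul0r.
  have E2 : \sum_(p | candP e xm ym xp yp p) (p.2 == v)%:R * F p =
            \sum_(p | candP e xm ym xp yp p && (p.2 == v)) F p.
    by rewrite [RHS]big_mkcondr; apply: eq_bigr => p _; case: eqP => _; rewrite ?mul1r ?mul0r.
  rewrite E1 E2; have := fiber1 v; have := fiber2 v; rewrite /F; lra.
rewrite sumr_const ler_nat.
have h1 := (leq_card_setU [set q.1 | q in M] [set q.2 | q in M]).1.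
have h2 := leq_imset_card fst M; have h3 := leq_imset_card snd M.
apply: (leq_trans h1); apply: (leq_trans (leq_add h2 h3)).
move: Mlt; set k := #|M|; move=> Mlt; lia.
Qed.

End Main.

Unset Implicit Arguments. Unset Strict Implicit.
Close Scope ring_scope.

Theorem lemma5p10 (R : realFieldType) (T : finType) (e : rel T) (l : nat)
    (xm ym xp yp : T) :
  simple_graph e ->
  (2 <= l)%N ->
  (0 < avg_deg R e)%R ->
  e xm ym -> e xp yp -> uniq [:: xm; ym; xp; yp] ->
  ~ rich e l xm ym xp yp ->
  let d := avg_deg R e in
  let n : R := (#|T|%:R)%R in
  (\sum_(p : T * T |
       uniq [:: xm; ym; p.1; p.2; xp; yp] &&
       [&& e p.1 p.2, e xm p.1, e p.1 xp, e ym p.2 & e p.2 yp])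
     1 / (Num.max ((codeg e xm p.2)%:R) (d ^+ 2 / n) *
          Num.max ((codeg e p.1 yp)%:R) (d ^+ 2 / n))
   <= (8 * l)%:R)%R.
Proof.
move=> sg _ _ em ep uq nr; case: sg => es _.
exact: (@main_bound R T e xm ym xp yp (avg_deg R e ^+ 2 / (#|T|%:R))%R es em ep l nr uq).
Qed.
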